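(* Consider the Que Sera Consensus (QSC) protocol, as described in the context, running on $n$ nodes atop a full-spread threshold synchronous broadcast primitive $\mathrm{TSB}(t_r,t_b,n)$ with $t_r>0$ and $t_b>0$. If the network's choice of the sets $N_R$ and $N_B$ (determining which messages each node receives and learns were reliably broadcast) is independent of the proposal priorities, and $p_t$ is the probability that two nodes tie for highest priority in a round, then each node delivers a history in each round independently with probability at least $t_b/n-p_t$.
   Context: Threshold synchronous broadcast (TSB). A group of $n$ nodes, numbered $1,\dots,n$, operates in integer logical time-steps $0,1,2,\dots$. Nodes may fail only by crashing permanently. In each time-step every non-failed node calls $\mathrm{Broadcast}(m)$ exactly once; the call returns a pair $(R,B)$ of message sets. A primitive provides $\mathrm{TSB}(t_r,t_b,t_s)$ if: (lock-step synchrony) a call to $\mathrm{Broadcast}(m)$ at step $s$ returns at step $s+1$ unless the node fails before reaching step $s+1$; (receive threshold) if node $i$'s call at step $s$ returns $(R,B)$, there is $N_R\subseteq\{1,\dots,n\}$ with $|N_R|\ge t_r$ such that $R$ is exactly the set of messages broadcast by the nodes in $N_R$ during step $s$; (broadcast threshold) there is $N_B\subseteq\{1,\dots,n\}$ with $|N_B|\ge t_b$ such that $B$ is exactly the set of messages broadcast by the nodes in $N_B$ during step $s$; (spread threshold) if some node's call at step $s$ returns $(R,B)$ with $m'\in B$, then there are at least $t_s$ nodes whose receive sets $R$ returned from their step-$s$ calls include $m'$ (a node that fails before completing step $s$ counts if it would have received $m'$ had it not failed). The case $t_s=n$ is called full-spread. Histories and priorities. A proposal is a triple $\langle i,m,r\rangle$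 (node, message, numeric priority). A history is a finite list of proposals; $[]$ is the empty history and $\|$ is list concatenation. The priority of a nonempty history is the priority $r$ of its last proposal. A history $h$ is best in a set $H$ if $h\in H$ and no $h'\in H$ has strictly greater priority; $h$ is uniquely best in $H$ if $h\in H$ and no other $h'\ne h$ in $H$ has priority greater than or equal to that of $h$. QSC protocol. It is parameterized by functions ChooseMessage (returns some message, possibly empty), Deliver (passes a history to the application), RandomValue (returns a value drawn using node-private randomness, independently on each node, from a fixed nontrivial distribution that is the same on every node), and Broadcast (the TSB primitive). Each node $i$ runs: set $h\leftarrow[]$; then forever repeat a consensus round: $m\leftarrow\mathrm{ChooseMessage}()$; $r\leftarrow\mathrm{RandomValue}()$; $h'\leftarrow h\,\|\,[\langle i,m,r\rangle]$; $(R',B')\leftarrow\mathrm{Broadcast}(h')$; $h''\leftarrow$ any best history in $B'$; $(R'',B'')\leftarrow\mathrm{Broadcast}(h'')$; $h\leftarrow$ any best history in $R''$; if $h\in B''$ and $h$ is uniquely best in $R'$, call $\mathrm{Deliver}(h)$. Each round occupies two time-steps. *)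

(* Defs.v *)
From HB Require Import structures.
From mathcomp Require Import all_boot all_order all_algebra.
From mathcomp Require Import all_classical all_reals all_analysis.
Set Implicit Arguments. Unset Strict Implicit. Unset Printing Implicit Defensive.
Import Order.TTheory GRing.Theory Num.Theory.
Local Open Scope classical_set_scope.
Local Open Scope ring_scope.

Section QSC.
Variables (R : realType) (n : nat) (M : Type).

Definition proposal := ('I_n * M * R)%type.
Definition history := seq proposal.

(* priority of a nonempty history = priority of its last proposal
   (the value on the empty history is irrelevant: every history that is
   broadcast in QSC is nonempty) *)
Definition prio (h : history) : R :=
  match h with [::] => 0 | p :: h' => (last p h').2 end.

Definition best (h : history) (H : set history) : Prop :=
  H h /\ forall h', H h' -> prio h' <= prio h.

Definition uniquely_best (h : history) (H : set history) : Prop :=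
  H h /\ forall h', H h' -> h' <> h -> prio h' < prio h.

Definition msgs_of (msg : 'I_n -> history) (N : {set 'I_n}) : set history :=
  [set h | exists2 j, j \in N & h = msg j].

(* ---------- one QSC consensus round (two TSB time-steps) ----------
   hs j : history of node j at the start of the round,
   ms j : message returned by ChooseMessage at node j,
   r j  : priority returned by RandomValue at node j,
   NR1/NB1 (resp. NR2/NB2) : the network's choice of N_R / N_B for each
   node's Broadcast call in the first (resp. second) time-step,
   sel1 j / sel2 j : node j's resolution of "any best history in ...". *)
Definition step1_msg (hs : 'I_n -> history) (ms : 'I_n -> M) (r : 'I_n -> R)
  (j : 'I_n) : history := hs j ++ [:: (j, ms j, r j)].

Definition step2_msg hs ms r (NB1 : 'I_n -> {set 'I_n})
  (sel1 : 'I_n -> set history -> history) (j : 'I_n) : history :=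
  sel1 j (msgs_of (step1_msg hs ms r) (NB1 j)).

Definition delivers hs ms r (NR1 NB1 NR2 NB2 : 'I_n -> {set 'I_n})
  (sel1 sel2 : 'I_n -> set history -> history) (i : 'I_n) : Prop :=
  let R1 := msgs_of (step1_msg hs ms r) (NR1 i) in
  let R2 := msgs_of (step2_msg hs ms r NB1 sel1) (NR2 i) in
  let B2 := msgs_of (step2_msg hs ms r NB1 sel1) (NB2 i) in
  let h := sel2 i R2 in
  B2 h /\ uniquely_best h R1.

(* ---------- the TSB(t_r, t_b, n) (full-spread) guarantees for one step ----
   A : nodes that broadcast in this step, C : nodes whose call of this step
   returns (C \subset A), msg : the messages broadcast.
   N_R, N_B only contain broadcasting nodes; thresholds hold for every
   returning call; full spread: a message in some returned B lies in the
   (possibly hypothetical, for failed nodes) receive set of every node. *)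
Definition TSB_step (tr tb : nat) (A C : {set 'I_n}) (msg : 'I_n -> history)
  (NR NB : 'I_n -> {set 'I_n}) : Prop :=
  [/\ C \subset A,
      forall j, NR j \subset A /\ NB j \subset A,
      forall j, j \in C -> (tr <= #|NR j|)%N /\ (tb <= #|NB j|)%N
    & forall k h, k \in C -> msgs_of msg (NB k) h ->
        forall l : 'I_n, msgs_of msg (NR l) h].

Definition selects_best (sel : 'I_n -> set history -> history) : Prop :=
  forall j H, (exists h, best h H) -> best (sel j H) H.

End QSC.

Section Prob.
Local Open Scope ereal_scope.
Variables (d : measure_display) (Omega : measurableType d) (R : realType)
  (P : probability Omega R) (n : nat).

Definition mutually_independent (r : 'I_n -> Omega -> R) : Prop :=
  forall B : 'I_n -> set R, (forall j, measurable (B j)) ->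
    P [set w | forall j, B j (r j w)] =
    \big[*%E/1%E]_(j < n) P (r j @^-1` B j).

Definition identically_distributed (r : 'I_n -> Omega -> R) : Prop :=
  forall j k (B : set R), measurable B -> P (r j @^-1` B) = P (r k @^-1` B).

Definition nontrivial_distribution (r : 'I_n -> Omega -> R) : Prop :=
  forall j, ~ (exists a : R, P (r j @^-1` [set a]) = 1).

(* "E has probability at least x": some measurable subset of E has
   probability >= x (inner probability; avoids measurability side issues) *)
Definition prob_at_least (E : set Omega) (x : \bar R) : Prop :=
  exists2 F, measurable F & F `<=` E /\ x <= P F.

End Prob.

Definition tie_for_highest (R : realType) (n : nat) (A : {set 'I_n})
  (r : 'I_n -> R) : Prop :=
  exists j k, [/\ j \in A, k \in A, j != k, r j = r k
                & forall l, l \in A -> (r l <= r j)%R].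

(* Main.v *)
Require Import Defs.
From HB Require Import structures.
From mathcomp Require Import all_boot all_order all_algebra.
From mathcomp Require Import all_classical all_reals all_analysis.
From mathcomp Require Import lra.
Import Order.TTheory GRing.Theory Num.Theory.
Local Open Scope classical_set_scope.
Local Open Scope ring_scope.


Section Det.
Variables (R : realType) (n : nat) (M : Type).
Variables (hs : 'I_n -> history R n M) (ms : 'I_n -> M) (x : 'I_n -> R).
Let msg1 := step1_msg hs ms x.

Lemma prio_msg1 j : prio (msg1 j) = x j.
Proof.
rewrite /msg1 /step1_msg /prio; case: (hs j) => [|a s] //=.
by rewrite last_cat.
Qed.

Variables (A1 : {set 'I_n}) (j : 'I_n).
Hypothesis jmax : forall l, l \in A1 -> l != j -> x l < x j.

Lemma best_star (S : {set 'I_n}) : S \subset A1 -> j \in S ->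
  best (msg1 j) (msgs_of msg1 S).
Proof.
move=> SA jS; split; first by exists j.
move=> h' [l lS ->]; rewrite !prio_msg1.
have [->//|ne] := eqVneq l j.
by apply/ltW/jmax => //; apply: (fintype.subsetP SA).
Qed.

Lemma best_is_star (S : {set 'I_n}) h : S \subset A1 -> best h (msgs_of msg1 S) ->
  x j <= prio h -> h = msg1 j.
Proof.
move=> SA [[l lS ->] _]; rewrite prio_msg1 => le.
have [->//|ne] := eqVneq l j.
have := jmax l (fintype.subsetP SA l lS) ne; by rewrite ltNge le.
Qed.

Lemma best_exists (S : {set 'I_n}) l0 : l0 \in S -> exists h, best h (msgs_of msg1 S).
Proof.
move=> l0S.
case: (@real_arg_maxP _ _ l0 (fun l => l \in S) x l0S) => [|m mS mmax].
  by move=> *; apply: num_real.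
exists (msg1 m); split; first by exists m.
by move=> h' [l lS ->]; rewrite !prio_msg1; apply: mmax.
Qed.

End Det.

Lemma det (R : realType) (n : nat) (M : Type) tr tb (hs : 'I_n -> history R n M) ms
  (x : 'I_n -> R) (A1 C1 A2 C2 : {set 'I_n}) (NR1 NB1 NR2 NB2 : 'I_n -> {set 'I_n})
  (sel1 sel2 : 'I_n -> set (history R n M) -> history R n M) (i k j : 'I_n) :
  (0 < tb)%N -> selects_best sel1 -> selects_best sel2 -> A2 \subset C1 ->
  TSB_step tr tb A1 C1 (step1_msg hs ms x) NR1 NB1 ->
  TSB_step tr tb A2 C2 (step2_msg hs ms x NB1 sel1) NR2 NB2 ->
  i \in C2 -> k \in NB2 i -> j \in NB1 k ->
  (forall l, l \in A1 -> l != j -> x l < x j) ->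
  delivers hs ms x NR1 NB1 NR2 NB2 sel1 sel2 i.
Proof.
move=> tb0 s1 s2 A2C1 [_ sub1 thr1 spr1] [_ sub2 thr2 spr2] iC2 kNB jNB jmax.
set msg1 := step1_msg hs ms x.
set msg2 := step2_msg hs ms x NB1 sel1.
have kC1 : k \in C1 by apply: (fintype.subsetP A2C1); apply: (fintype.subsetP (sub2 i).2).
have NB1A : forall l, NB1 l \subset A1 by move=> l; case: (sub1 l).
have jA1 : j \in A1 by apply: (fintype.subsetP (NB1A k)).
have m2k : msg2 k = msg1 j.
  have b := @best_star _ _ _ hs ms x A1 j jmax _ (NB1A k) jNB.
  have bs := s1 k _ (ex_intro (fun h => best h _) _ b).
  apply: (@best_is_star _ _ _ hs ms x A1 j jmax _ _ (NB1A k) bs).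
  by rewrite -(@prio_msg1 _ _ _ hs ms x j); case: bs => _; apply; exists j.
have R1star : msgs_of msg1 (NR1 i) (msg1 j).
  by apply: (spr1 k) => //; exists j.
have R2star : msgs_of msg2 (NR2 i) (msg1 j).
  by apply: (spr2 i) => //; exists k.
have R2le : forall h', msgs_of msg2 (NR2 i) h' -> prio h' <= x j.
  move=> h' [l lNR ->].
  have lC1 : l \in C1 by apply: (fintype.subsetP A2C1); apply: (fintype.subsetP (sub2 i).1).
  have /card_gt0P [l0 l0NB] : (0 < #|NB1 l|)%N.
    by apply: leq_trans tb0 _; case: (thr1 l lC1).
  have [[l3 l3NB eq3] _] := s1 l _ (@best_exists _ _ _ hs ms x _ _ l0NB).
  rewrite /msg2 /step2_msg -/msg1 eq3 prio_msg1.
  have [->//|ne] := eqVneq l3 j.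
  by apply/ltW/jmax => //; apply: (fintype.subsetP (NB1A l)).
have bR2 : best (msg1 j) (msgs_of msg2 (NR2 i)).
  by split => // h' /R2le; rewrite prio_msg1.
have hb := s2 i _ (ex_intro (fun h => best h _) _ bR2).
have hstar : sel2 i (msgs_of msg2 (NR2 i)) = msg1 j.
  case: (hb) => [[l lNR eq] hmax].
  have lC1 : l \in C1 by apply: (fintype.subsetP A2C1); apply: (fintype.subsetP (sub2 i).1).
  have /card_gt0P [l0 l0NB] : (0 < #|NB1 l|)%N.
    by apply: leq_trans tb0 _; case: (thr1 l lC1).
  have bl := s1 l _ (@best_exists _ _ _ hs ms x _ _ l0NB).
  rewrite eq; apply: (@best_is_star _ _ _ hs ms x A1 j jmax _ _ (NB1A l) bl).
  rewrite -(@prio_msg1 _ _ _ hs ms x j) -/msg2.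
  have -> : sel1 l (msgs_of msg1 (NB1 l)) = msg2 l by [].
  by rewrite -eq; apply: hmax.
rewrite /delivers -/msg1 -/msg2 hstar; split.
  by exists k => //; rewrite m2k.
split => // h' [l lNR ->] ne.
rewrite !prio_msg1; apply: jmax.
  by apply: (fintype.subsetP (sub1 i).1).
by apply/eqP => lj; apply: ne; rewrite lj.
Qed.



Definition sw (n : nat) (a b : 'I_n) (l : 'I_n) : 'I_n := if l == a then b else if l == b then a else l.
Arguments sw {n}.

Lemma swK n (a b : 'I_n) : involutive (sw a b).
Proof.
move=> l; rewrite /sw.
case: (eqVneq l a) => [->|la]; first by rewrite eqxx; case: (eqVneq b a) => [->|ba]; rewrite ?eqxx.
case: (eqVneq l b) => [->|lb]; first by rewrite eqxx.
by rewrite (negbTE la) (negbTE lb).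
Qed.
Arguments swK {n}.

Section Prob.
Variables (R : realType) (d : measure_display) (Omega : measurableType d)
  (P : probability Omega R) (n : nat) (r : 'I_n -> Omega -> R).
Hypotheses (rm : forall j, measurable_fun setT (r j))
  (indep : mutually_independent P r) (ident : identically_distributed P r).

Lemma meas_fin (F : 'I_n -> set Omega) : (forall j, measurable (F j)) ->
  measurable [set w | forall j, F j w].
Proof.
move=> mF.
have -> : [set w | forall j, F j w] =
    \bigcap_k (fun k => if insub k is Some j then F j else setT) k.
  apply/seteqP; split => w /=.
    by move=> H k _ /=; case: insub.
  by move=> H j; have := H (val j) I; rewrite /= valK.
apply: bigcap_measurableType => k _; case: insub => [j|]; [exact: mF|exact: measurableT].
Qed.

Lemma meas_pre j B : measurable B -> measurable (r j @^-1` B).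
Proof. by move=> mB; rewrite -[X in measurable X]setTI; exact: rm. Qed.

Definition rect : set (set ('I_n -> R)) :=
  [set B | exists2 Bs : 'I_n -> set R, (forall j, measurable (Bs j)) &
     B = [set x | forall j, Bs j (x j)]].

Lemma rect_setI : setI_closed rect.
Proof.
move=> _ _ [Bs mBs ->] [Bs' mBs' ->].
exists (fun j => Bs j `&` Bs' j) => [j|]; first exact: measurableI.
apply/seteqP; split => x /=.
  by move=> [H1 H2] j; split.
by move=> H; split => j; case: (H j).
Qed.

Section tau.
Variable tau : 'I_n -> 'I_n.
Hypothesis tauK : involutive tau.
Let Y0 := fun w (j : 'I_n) => r j w.
Let Yt := fun w (j : 'I_n) => r (tau j) w.

Definition Hc := [set B : set ('I_n -> R) | [/\ measurable (Y0 @^-1` B),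
  measurable (Yt @^-1` B) & P (Y0 @^-1` B) = P (Yt @^-1` B)]].

Lemma rectH : rect `<=` Hc.
Proof.
move=> _ [Bs mBs ->].
have et : Yt @^-1` [set x | forall j, Bs j (x j)] =
    [set w | forall j, (fun j => Bs (tau j)) j (r j w)].
  apply/seteqP; split => w; rewrite /Yt /= => H j.
    by have := H (tau j); rewrite tauK.
  by have := H (tau j); rewrite tauK.
split.
- by apply: meas_fin => j; apply: meas_pre.
- by rewrite et; apply: meas_fin => j; apply: meas_pre.
rewrite et.
have -> : Y0 @^-1` [set x | forall j, Bs j (x j)] =
    [set w | forall j, Bs j (r j w)] by [].
rewrite (indep Bs mBs) (indep (fun j => Bs (tau j)) (fun j => mBs (tau j))).
rewrite [LHS](reindex_inj (inv_inj tauK)) /=.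
by apply: eq_bigr => j _; apply: ident.
Qed.

Lemma Hc_lambda : lambda_system setT Hc.
Proof.
split.
- by [].
- by rewrite /Hc /= !preimage_setT; split => //; exact: measurableT.
- move=> A B BA [mA mA' eA] [mB mB' eB].
  have fin : forall X, measurable X -> (P X < +oo)%E.
    by move=> X mX; apply: le_lt_trans (probability_le1 P mX) (ltry _).
  split; [exact: measurableD|exact: measurableD|].
  have -> : Y0 @^-1` (A `\` B) = Y0 @^-1` A `\` Y0 @^-1` B by [].
  have -> : Yt @^-1` (A `\` B) = Yt @^-1` A `\` Yt @^-1` B by [].
  rewrite !measureD //; try exact: fin.
  have s0 : Y0 @^-1` B `<=` Y0 @^-1` A by move=> w /BA.
  have st : Yt @^-1` B `<=` Yt @^-1` A by move=> w /BA.
  by rewrite (setIidr s0) (setIidr st); congr (_ - _)%E.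
- move=> F ndF HF.
  have m0 : forall i, measurable (Y0 @^-1` F i) by move=> i; case: (HF i).
  have mt : forall i, measurable (Yt @^-1` F i) by move=> i; case: (HF i).
  rewrite /Hc /= !preimage_bigcup.
  split; [exact: bigcupT_measurable|exact: bigcupT_measurable|].
  have h0 : {homo (fun i => Y0 @^-1` F i) : a b / (a <= b)%N >-> (a <= b)%O}.
    move=> a b ab; apply/subsetPset => w /=.
    by have /subsetPset := ndF a b ab; apply.
  have ht : {homo (fun i => Yt @^-1` F i) : a b / (a <= b)%N >-> (a <= b)%O}.
    move=> a b ab; apply/subsetPset => w /=.
    by have /subsetPset := ndF a b ab; apply.
  have c0 := nondecreasing_cvg_mu (mu := P) m0 (bigcupT_measurable _ m0) h0.
  have ct := nondecreasing_cvg_mu (mu := P) mt (bigcupT_measurable _ mt) ht.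
  have eqf : (P \o (fun i => Y0 @^-1` F i)) = (P \o fun i => Yt @^-1` F i).
    by apply: funext => i /=; case: (HF i).
  move: c0; rewrite eqf => c0.
  exact: (cvg_unique (@ereal_hausdorff R) c0 ct).
Qed.

Lemma sym B : <<s rect >> B -> Hc B.
Proof.
apply: (lambda_system_subset rect_setI Hc_lambda rectH).
by move=> X _.
Qed.
End tau.

Definition Fj (A : {set 'I_n}) (j : 'I_n) : set ('I_n -> R) :=
  [set x | forall l, l \in A -> l != j -> x l < x j].

Lemma Fj_gen A j : <<s rect >> (Fj A j).
Proof.
pose rq (q : rat) := [set x : 'I_n -> R | forall l,
  (if l == j then `]ratr q, +oo[%classic else
   if l \in A then `]-oo, ratr q[%classic else setT) (x l)].
have [s0 _ sU] := smallest_sigma_algebra setT rect.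
have -> : Fj A j = \bigcup_m (if @pickle_inv rat m is Some q then rq q else set0).
  apply/seteqP; split => x.
    move=> Hx.
    have [b [bj bl]] : exists b, b < x j /\ forall l, l \in A -> l != j -> x l <= b.
      case: (pickP (fun l => (l \in A) && (l != j))) => [l0 l0P|none].
        case: (@real_arg_maxP _ _ l0 (fun l => (l \in A) && (l != j)) x l0P).
          by move=> *; apply: num_real.
        move=> m /andP[mA mj] mmax.
        exists (x m); split; first exact: Hx.
        by move=> l lA lj; apply: mmax; rewrite lA lj.
      exists (x j - 1); split; first by rewrite gtrBl ltr01.
      by move=> l lA lj; have := none l; rewrite lA lj.
    have [q] := rat_in_itvoo bj; rewrite in_itv /= => /andP[bq qj].
    exists (pickle q); first by []. rewrite /= pickleK_inv => l.
    case: ifP => [/eqP->|/negbT lj].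
      change (x j \in `]ratr q, +oo[); by rewrite in_itv /= andbT.
    case: ifP => [lA|_] //.
    change (x l \in `]-oo, ratr q[); rewrite in_itv /=.
    by apply: le_lt_trans (bl _ lA lj) bq.
  move=> [m _]; case: pickle_inv => [q|//] Gx l lA lj.
  have := Gx l; have := Gx j; rewrite eqxx (negbTE lj) lA.
  change (x j \in `]ratr q, +oo[ -> x l \in `]-oo, ratr q[ -> x l < x j).
  rewrite !in_itv /= andbT.
  by move=> h1 h2; apply: lt_trans h2 h1.
apply: sU => m; case: pickle_inv => [q|]; last exact: s0.
apply: sub_gen_smallest.
exists (fun l => if l == j then `]ratr q, +oo[%classic else
   if l \in A then `]-oo, ratr q[%classic else setT) => // l.
case: ifP => _; first exact: measurable_itv.
case: ifP => _; first exact: measurable_itv.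
exact: measurableT.
Qed.

Section Main.
Variables (A : {set 'I_n}).
Let E j := [set w | forall l, l \in A -> l != j -> r l w < r j w].

Lemma mE j : measurable (E j).
Proof. by have [] := @sym id (fun _ => erefl) _ (Fj_gen A j). Qed.

Lemma pE j j' : j \in A -> j' \in A -> P (E j) = P (E j').
Proof.
move=> jA j'A.
have [_ _ e] := @sym _ (swK j j') _ (Fj_gen A j).
have swj : sw j j' j = j' by rewrite /sw eqxx.
have swA : forall l, l \in A -> sw j j' l \in A.
  by move=> l lA; rewrite /sw; case: ifP => _ //; case: ifP.
transitivity (P ((fun w j0 => r (sw j j' j0) w) @^-1` Fj A j)); first exact: e.
congr (P _); apply/seteqP; split => w /= H l lA lj.
  have ne : sw j j' l != j.
    apply/eqP => e'; move/eqP: lj; apply; by rewrite -(swK j j' l) e' swj.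
  by have := H _ (swA _ lA) ne; rewrite swK swj.
rewrite swj; apply: H; first exact: swA.
apply/eqP => e'; move/eqP: lj; apply.
rewrite -(swK j j' l) e' /sw; case: eqP => [//|_]; by rewrite eqxx.
Qed.

Let U (S : {set 'I_n}) := [set w | exists2 j, j \in S & E j w].

Lemma mU S : measurable (U S).
Proof.
have -> : U S = \bigcup_k (if insub k is Some j then
    (if j \in S then E j else set0) else set0).
  apply/seteqP; split => w.
    by move=> [j jS Ej]; exists (val j) => //=; rewrite valK jS.
  move=> [k _]; case: insub => [j|//]; case: ifP => [jS Ej|//].
  by exists j.
apply: bigcupT_measurable => k; case: insub => [j|]; last exact: measurable0.
by case: ifP => _; [exact: mE|exact: measurable0].
Qed.

Variable j0 : 'I_n.
Hypothesis j0A : j0 \in A.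
Let q := fine (P (E j0)).

Lemma PEq j : j \in A -> P (E j) = q%:E.
Proof.
move=> jA; rewrite (pE j j0 jA j0A) /q fineK // ge0_fin_numE ?measure_ge0 //.
by apply: le_lt_trans (probability_le1 P (mE j0)) (ltry _).
Qed.

Lemma PU m (S : {set 'I_n}) : #|S| = m -> S \subset A -> P (U S) = (m%:R * q)%:E.
Proof.
elim: m S => [|m IH] S cS SA.
  rewrite (cards0_eq cS) mul0r.
  have -> : U finset.set0 = set0.
    by apply/seteqP; split => w // [j]; rewrite inE.
  exact: measure0.
have /card_gt0P [x xS] : (0 < #|S|)%N by rewrite cS.
have xA : x \in A by apply: (fintype.subsetP SA).
have -> : U S = E x `|` U (S :\ x).
  apply/seteqP; split => w.
    move=> [j jS Ej]; case: (eqVneq j x) => [jx|jx]; first by left; rewrite -jx.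
    by right; exists j => //; rewrite in_setD1 jx.
  case=> [Ex|[j]]; first by exists x.
  by rewrite in_setD1 => /andP[_ jS] Ej; exists j.
rewrite measureU; first last.
- apply/seteqP; split => w // [Ex [j]]; rewrite in_setD1 => /andP[jx jS] Ej.
  have jA : j \in A by apply: (fintype.subsetP SA).
  have h1 := Ex j jA jx.
  have h2 := Ej x xA (ltac:(by rewrite eq_sym)).
  by have := lt_trans h1 h2; rewrite ltxx.
- exact: mU.
- exact: mE.
transitivity (q%:E + (m%:R * q)%:E)%E.
  congr (_ + _)%E; first exact: PEq x xA.
  apply: IH.
    by move: cS; rewrite (cardsD1 x S) xS add1n => -[].
  by apply: fintype.subset_trans SA; apply: subsetDl.
by rewrite -EFinD -natr1 mulrDl mul1r addrC.
Qed.

Lemma tieU : [set w | tie_for_highest A (fun j => r j w)] = ~` U A.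
Proof.
apply/seteqP; split => w.
  move=> [j [k [jA kA jk ejk mx]]] [l lA El].
  case: (eqVneq l j) => [lj|lj].
    have kl : k != l by rewrite lj eq_sym.
    by have := El k kA kl; rewrite lj ejk ltxx.
  have := El j jA (ltac:(by rewrite eq_sym)).
  by rewrite ltNge mx.
move=> /= nU.
case: (@real_arg_maxP _ _ j0 (fun l => l \in A) (fun l => r l w) j0A).
  by move=> *; apply: num_real.
move=> m mA mmax.
case: (pselect (exists l, [/\ l \in A, l != m & r m w <= r l w])).
  move=> [l [lA lm le]]; exists m, l; split => //.
  - by rewrite eq_sym.
  - by apply/eqP; rewrite eq_le le /=; apply: (mmax l lA).
move=> nx; exfalso; apply: nU; exists m => // l lA lm.
rewrite ltNge; apply/negP => le; apply: nx; exists l; split => //; rewrite leNgt le.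
Qed.

Lemma bound (S : {set 'I_n}) (t : R) : S \subset A -> 0 <= t -> t <= 1 ->
  t * #|A|%:R <= #|S|%:R ->
  (t%:E - P [set w | tie_for_highest A (fun j => r j w)] <= P (U S))%E.
Proof.
move=> SA t0 t1 tAS.
have hA := PU #|A| A erefl (fintype.subxx A).
have q0 : 0 <= q by apply: fine_ge0; apply: measure_ge0.
have aq1 : #|A|%:R * q <= 1.
  by rewrite -lee_fin -hA; apply: probability_le1; apply: mU.
rewrite tieU probability_setC; last exact: mU.
rewrite hA (PU #|S| S erefl SA).
have -> : (1 - (#|A|%:R * q)%:E)%E = (1 - #|A|%:R * q)%:E by rewrite EFinB.
rewrite -EFinB lee_fin.
have h1 : 0 <= 1 - t by rewrite subr_ge0.
have h2 : 0 <= 1 - #|A|%:R * q by rewrite subr_ge0.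
have h3 : 0 <= #|S|%:R - t * #|A|%:R by rewrite subr_ge0.
nra.
Qed.

End Main.

End Prob.

Theorem lemma4 (R : realType) (d : measure_display) (Omega : measurableType d)
  (P : probability Omega R) (n : nat) (M : Type) (tr tb : nat)
  (r : 'I_n -> Omega -> R)
  (hs : 'I_n -> history R n M) (ms : 'I_n -> M)
  (A1 C1 A2 C2 : {set 'I_n}) (NR1 NB1 NR2 NB2 : 'I_n -> {set 'I_n})
  (sel1 sel2 : 'I_n -> set (history R n M) -> history R n M) (i : 'I_n) :
  (0 < tr)%N -> (0 < tb)%N ->
  (forall j, measurable_fun setT (r j)) ->
  mutually_independent P r ->
  identically_distributed P r ->
  nontrivial_distribution P r ->
  selects_best sel1 -> selects_best sel2 ->
  A2 \subset C1 ->
  (forall w, TSB_step tr tb A1 C1 (step1_msg hs ms (fun j => r j w)) NR1 NB1) ->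
  (forall w, TSB_step tr tb A2 C2
               (step2_msg hs ms (fun j => r j w) NB1 sel1) NR2 NB2) ->
  i \in C2 ->
  prob_at_least P
    [set w | delivers hs ms (fun j => r j w) NR1 NB1 NR2 NB2 sel1 sel2 i]
    ((tb%:R / n%:R)%:E - P [set w | tie_for_highest A1 (fun j => r j w)])%E.

Proof.
move=> tr0 tb0 rm indep ident _ s1 s2 A2C1 tsb1 tsb2 iC2.
have [w0 _] : exists w : Omega, True.
  case: (pselect (exists w : Omega, True)) => // no; exfalso.
  have : P setT = P set0.
    by congr (P _); apply/seteqP; split => w // _; apply: no; exists w.
  by rewrite probability_setT measure0 => /eqP; rewrite eqe oner_eq0.
have [_ sub1 thr1 _] := tsb1 w0.
have [_ sub2 thr2 _] := tsb2 w0.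
have tbNB2 : (tb <= #|NB2 i|)%N by case: (thr2 i iC2).
have /card_gt0P [k kNB] : (0 < #|NB2 i|)%N by apply: leq_trans tb0 tbNB2.
have kC1 : k \in C1.
  by apply: (fintype.subsetP A2C1); apply: (fintype.subsetP (sub2 i).2).
have SA : NB1 k \subset A1 by case: (sub1 k).
have tbS : (tb <= #|NB1 k|)%N by case: (thr1 k kC1).
have /card_gt0P [j0 j0S] : (0 < #|NB1 k|)%N by apply: leq_trans tb0 tbS.
have j0A : j0 \in A1 by apply: (fintype.subsetP SA).
have n0 : (0 < n)%N by apply: leq_ltn_trans (leq0n _) (ltn_ord i).
have cmax : forall X : {set 'I_n}, (#|X| <= n)%N.
  by move=> X; apply: leq_trans (max_card _) _; rewrite card_ord.
have tbn : (tb <= n)%N by apply: leq_trans tbNB2 (cmax _).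
have An : (#|A1| <= n)%N by apply: cmax.
have SAc : (#|NB1 k| <= #|A1|)%N by apply: subset_leq_card.
have n0R : (0 : R) < n%:R by rewrite ltr0n.
set t : R := tb%:R / n%:R.
have t0 : 0 <= t by apply: divr_ge0; apply: ler0n.
have t1 : t <= 1 by rewrite /t ler_pdivrMr // mul1r ler_nat.
have tAS : t * #|A1|%:R <= #|NB1 k|%:R.
  apply: le_trans (_ : t * n%:R <= _).
    by apply: ler_wpM2l => //; rewrite ler_nat.
  by rewrite /t divfK ?ler_nat // gt_eqF.
exists [set w | exists2 j, j \in NB1 k &
   [set w | forall l, l \in A1 -> l != j -> r l w < r j w] w].
  exact: (@mU R d Omega P n r rm indep ident A1 (NB1 k)).
split.
  move=> w [j jS Ej].
  exact: (@det _ _ _ tr tb hs ms _ A1 C1 A2 C2 NR1 NB1 NR2 NB2 sel1 sel2 i k j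
    tb0 s1 s2 A2C1 (tsb1 w) (tsb2 w) iC2 kNB jS Ej).
exact: (@bound R d Omega P n r rm indep ident A1 j0 j0A (NB1 k) t SA t0 t1 tAS).
Qed.
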